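(* Let $f:X\to Y$ be a morphism of $\mathbf{OMLatGal}$. Then: (i) the image $\mathrm{Im}(f)=\ker(\mathrm{coker}(f))$ is the morphism $i_f:\downarrow(f_*(1)^\perp)\to Y$ with $(i_f)_*(v)=v^\perp$ and $(i_f)^*(y)=y^\perp\wedge f_*(1)^\perp$; (ii) the pair $e_f:X\to\downarrow(f_*(1)^\perp)$ with $(e_f)_*(x)=f_*(x)\wedge f_*(1)^\perp$ and $(e_f)^*(v)=f^*(v)$ is a morphism of $\mathbf{OMLatGal}$ satisfying $i_f\circ e_f=f$, and $e_f$ is zero-epic (its cokernel is zero); (iii) the pair $m_f:\downarrow(f^*(1)^\perp)\to\downarrow(f_*(1)^\perp)$ with $(m_f)_*(x)=f_*(x)\wedge f_*(1)^\perp$ and $(m_f)^*(v)=f^*(v)\wedge f^*(1)^\perp$ is a morphism that is both zero-epic and zero-monic, and $m_f\circ(i_{f^\dagger})^\dagger=e_f$, so that $f=i_f\circ m_f\circ(i_{f^\dagger})^\dagger$.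
   Context: An orthomodular lattice is a bounded lattice with an order-reversing involution $x\mapsto x^\perp$ such that $x\wedge x^\perp=0$, $x\vee x^\perp=1$, and $x\le y$ implies $y=x\vee(x^\perp\wedge y)$. The category $\mathbf{OMLatGal}$ has orthomodular lattices as objects; a morphism $f:X\to Y$ is a pair $(f_*,f^* )$ of order-reversing functions $f_*:X\to Y$, $f^*:Y\to X$ such that $y\le f_*(x)$ iff $x\le f^*(y)$ for all $x\in X,y\in Y$. The identity on $X$ is the pair whose both components are $x\mapsto x^\perp$. Composition of $f:X\to Y$ and $g:Y\to Z$ is $(g\circ f)_*=g_*\circ(-)^\perp\circ f_*$, $(g\circ f)^*=f^*\circ(-)^\perp\circ g^*$. The dagger is $(f_*,f^* )^\dagger=(f^*,f_* )$. It is a dagger kernel category whose zero object is the one-element lattice and where the dagger kernel of $f:X\to Y$ is the downset morphism $\downarrow f^*(1)\to X$; for $a\in X$, $\downarrow a=\{u\le a\}$ carries the order of $X$ and complement $u^{\perp_a}=a\wedge u^\perp$, and the downset morphism $a:\downarrow a\to X$ has $a_*(u)=u^\perp$, $a^*(x)=a\wedge x^\perp$. The cokernel is $\mathrm{coker}(f)=\ker(f^\dagger)^\dagger$. A morphism $e$ is zero-epic if $g\circ e=0$ implies $g=0$ (equivalently $\mathrm{coker}(e)=0$), and zero-monic if $m\circ g=0$ implies $g=0$. *)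

(* Defs.v *)
From Stdlib Require Import ProofIrrelevance Setoid.

Record OML : Type := {
  car :> Type;
  le : car -> car -> Prop;
  meet : car -> car -> car;
  join : car -> car -> car;
  bot : car;
  top : car;
  compl : car -> car;
  le_refl : forall x, le x x;
  le_trans : forall x y z, le x y -> le y z -> le x z;
  le_antisym : forall x y, le x y -> le y x -> x = y;
  meet_glb : forall x y z, le z (meet x y) <-> (le z x /\ le z y);
  join_lub : forall x y z, le (join x y) z <-> (le x z /\ le y z);
  bot_le : forall x, le bot x;
  le_top : forall x, le x top;
  compl_inv : forall x, compl (compl x) = x;
  compl_rev : forall x y, le x y -> le (compl y) (compl x);
  meet_compl : forall x, meet x (compl x) = bot;
  join_compl : forall x, join x (compl x) = top;
  om_law : forall x y, le x y -> y = join x (meet (compl x) y)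
}.

Arguments le {_} _ _.
Arguments meet {_} _ _.
Arguments join {_} _ _.
Arguments bot {_}.
Arguments top {_}.
Arguments compl {_} _.
Arguments le_refl {_} _.
Arguments le_trans {_} _ _ _ _ _.
Arguments le_antisym {_} _ _ _ _.
Arguments meet_glb {_} _ _ _.
Arguments join_lub {_} _ _ _.
Arguments bot_le {_} _.
Arguments le_top {_} _.
Arguments compl_inv {_} _.
Arguments compl_rev {_} _ _ _.
Arguments meet_compl {_} _.
Arguments join_compl {_} _.
Arguments om_law {_} _ _ _.

Lemma meet_l (X : OML) (x y : X) : le (meet x y) x.
Proof. exact (proj1 (proj1 (meet_glb x y (meet x y)) (le_refl _))). Qed.

Lemma meet_r (X : OML) (x y : X) : le (meet x y) y.
Proof. exact (proj2 (proj1 (meet_glb x y (meet x y)) (le_refl _))). Qed.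

Lemma join_l (X : OML) (x y : X) : le x (join x y).
Proof. exact (proj1 (proj1 (join_lub x y (join x y)) (le_refl _))). Qed.

Lemma join_r (X : OML) (x y : X) : le y (join x y).
Proof. exact (proj2 (proj1 (join_lub x y (join x y)) (le_refl _))). Qed.

Lemma meet_comm (X : OML) (x y : X) : meet x y = meet y x.
Proof.
  apply le_antisym; apply meet_glb; split;
    first [apply meet_r | apply meet_l].
Qed.

Lemma le_compl_l (X : OML) (x y : X) : le (compl x) y -> le (compl y) x.
Proof. intro H. pose proof (compl_rev _ _ H) as H'. rewrite compl_inv in H'. exact H'. Qed.

Lemma compl_meet (X : OML) (x y : X) :
  compl (meet x y) = join (compl x) (compl y).
Proof.
  apply le_antisym.
  - assert (H : le (compl (join (compl x) (compl y))) (meet x y)).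
    { apply meet_glb; split; apply le_compl_l; [apply join_l | apply join_r]. }
    pose proof (compl_rev _ _ H) as H'. rewrite compl_inv in H'. exact H'.
  - apply join_lub; split; apply compl_rev; [apply meet_l | apply meet_r].
Qed.

Lemma compl_join (X : OML) (x y : X) :
  compl (join x y) = meet (compl x) (compl y).
Proof.
  rewrite <- (compl_inv (meet (compl x) (compl y))), compl_meet, !compl_inv.
  reflexivity.
Qed.

Lemma om_dual (X : OML) (u a : X) : le u a -> u = meet a (join (compl a) u).
Proof.
  intro H. pose proof (om_law _ _ (compl_rev _ _ H)) as E.
  rewrite compl_inv in E.
  rewrite <- (compl_inv u) at 1. rewrite E, compl_join, compl_meet, !compl_inv.
  reflexivity.
Qed.

Definition dcar (X : OML) (a : X) : Type := {u : X | le u a}.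

Lemma dcar_eq (X : OML) (a : X) (u v : dcar X a) :
  proj1_sig u = proj1_sig v -> u = v.
Proof.
  destruct u as [u hu], v as [v hv]; simpl; intros ->.
  f_equal; apply proof_irrelevance.
Qed.

Definition d_le (X : OML) (a : X) (u v : dcar X a) : Prop :=
  le (proj1_sig u) (proj1_sig v).
Definition d_meet (X : OML) (a : X) (u v : dcar X a) : dcar X a :=
  exist (fun w => le w a) (meet (proj1_sig u) (proj1_sig v))
        (le_trans _ _ _ (meet_l _ _ _) (proj2_sig u)).
Definition d_join (X : OML) (a : X) (u v : dcar X a) : dcar X a :=
  exist (fun w => le w a) (join (proj1_sig u) (proj1_sig v))
        (proj2 (join_lub _ _ _) (conj (proj2_sig u) (proj2_sig v))).
Definition d_bot (X : OML) (a : X) : dcar X a := exist (fun u => le u a) bot (bot_le a).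
Definition d_top (X : OML) (a : X) : dcar X a := exist (fun u => le u a) a (le_refl a).
Definition d_compl (X : OML) (a : X) (u : dcar X a) : dcar X a :=
  exist (fun w => le w a) (meet a (compl (proj1_sig u))) (meet_l _ _ _).

Lemma d_le_antisym (X : OML) (a : X) (u v : dcar X a) :
  d_le X a u v -> d_le X a v u -> u = v.
Proof. intros H1 H2; apply dcar_eq, le_antisym; assumption. Qed.

Lemma d_meet_glb (X : OML) (a : X) (x y z : dcar X a) :
  d_le X a z (d_meet X a x y) <-> (d_le X a z x /\ d_le X a z y).
Proof. apply meet_glb. Qed.

Lemma d_join_lub (X : OML) (a : X) (x y z : dcar X a) :
  d_le X a (d_join X a x y) z <-> (d_le X a x z /\ d_le X a y z).
Proof. apply join_lub. Qed.

Lemma d_compl_inv (X : OML) (a : X) (u : dcar X a) :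
  d_compl X a (d_compl X a u) = u.
Proof.
  apply dcar_eq; simpl. rewrite compl_meet, compl_inv.
  symmetry; apply om_dual, (proj2_sig u).
Qed.

Lemma d_compl_rev (X : OML) (a : X) (u v : dcar X a) :
  d_le X a u v -> d_le X a (d_compl X a v) (d_compl X a u).
Proof.
  unfold d_le; simpl; intro H. apply meet_glb; split.
  - apply meet_l.
  - eapply le_trans; [apply meet_r | apply compl_rev, H].
Qed.

Lemma d_meet_compl (X : OML) (a : X) (u : dcar X a) :
  d_meet X a u (d_compl X a u) = d_bot X a.
Proof.
  apply dcar_eq; simpl. apply le_antisym; [| apply bot_le].
  rewrite <- (meet_compl (proj1_sig u)). apply meet_glb; split.
  - apply meet_l.
  - eapply le_trans; [apply meet_r | apply meet_r].
Qed.

Lemma d_join_compl (X : OML) (a : X) (u : dcar X a) :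
  d_join X a u (d_compl X a u) = d_top X a.
Proof.
  apply dcar_eq; simpl. rewrite meet_comm.
  symmetry; apply om_law, (proj2_sig u).
Qed.

Lemma d_om_law (X : OML) (a : X) (u v : dcar X a) :
  d_le X a u v -> v = d_join X a u (d_meet X a (d_compl X a u) v).
Proof.
  unfold d_le; intro H. apply dcar_eq; simpl.
  assert (E : meet (meet a (compl (proj1_sig u))) (proj1_sig v)
              = meet (compl (proj1_sig u)) (proj1_sig v)).
  { apply le_antisym; apply meet_glb; split.
    - eapply le_trans; [apply meet_l | apply meet_r].
    - apply meet_r.
    - apply meet_glb; split; [eapply le_trans; [apply meet_r | apply (proj2_sig v)] | apply meet_l].
    - apply meet_r. }
  rewrite E. apply om_law, H.
Qed.

Definition down (X : OML) (a : X) : OML := {|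
  car := dcar X a;
  le := d_le X a;
  meet := d_meet X a;
  join := d_join X a;
  bot := d_bot X a;
  top := d_top X a;
  compl := d_compl X a;
  le_refl := fun u => le_refl (proj1_sig u);
  le_trans := fun u v w => le_trans (proj1_sig u) (proj1_sig v) (proj1_sig w);
  le_antisym := d_le_antisym X a;
  meet_glb := d_meet_glb X a;
  join_lub := d_join_lub X a;
  bot_le := fun u => bot_le (proj1_sig u);
  le_top := fun u => proj2_sig u;
  compl_inv := d_compl_inv X a;
  compl_rev := d_compl_rev X a;
  meet_compl := d_meet_compl X a;
  join_compl := d_join_compl X a;
  om_law := d_om_law X a
|}.

Definition unitOML : OML := {|
  car := unit;
  le := fun _ _ => True;
  meet := fun _ _ => tt;
  join := fun _ _ => tt;
  bot := tt;
  top := tt;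
  compl := fun _ => tt;
  le_refl := fun _ => I;
  le_trans := fun _ _ _ _ _ => I;
  le_antisym := fun x y _ _ => match x, y with tt, tt => eq_refl end;
  meet_glb := fun _ _ _ => conj (fun _ => conj I I) (fun _ => I);
  join_lub := fun _ _ _ => conj (fun _ => conj I I) (fun _ => I);
  bot_le := fun _ => I;
  le_top := fun _ => I;
  compl_inv := fun x => match x with tt => eq_refl end;
  compl_rev := fun _ _ _ => I;
  meet_compl := fun _ => eq_refl;
  join_compl := fun _ => eq_refl;
  om_law := fun x y _ => match y with tt => eq_refl end
|}.

(** We represent candidate pairs by [mor X Y]
    and the morphism condition by [is_mor]. *)

Record mor (X Y : OML) : Type := Mor {
  lower : X -> Y;
  upper : Y -> X
}.
Arguments Mor {X Y} _ _.
Arguments lower {X Y} _ _.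
Arguments upper {X Y} _ _.

Definition is_mor {X Y : OML} (f : mor X Y) : Prop :=
  (forall x x' : X, le x x' -> le (lower f x') (lower f x)) /\
  (forall y y' : Y, le y y' -> le (upper f y') (upper f y)) /\
  (forall (x : X) (y : Y), le y (lower f x) <-> le x (upper f y)).

Definition meq {X Y : OML} (f g : mor X Y) : Prop :=
  (forall x, lower f x = lower g x) /\ (forall y, upper f y = upper g y).

Definition id_mor (X : OML) : mor X X := Mor (fun x => compl x) (fun x => compl x).

Definition comp {X Y Z : OML} (g : mor Y Z) (f : mor X Y) : mor X Z :=
  Mor (fun x => lower g (compl (lower f x)))
      (fun z => upper f (compl (upper g z))).

Definition dagger {X Y : OML} (f : mor X Y) : mor Y X :=
  Mor (upper f) (lower f).

Definition to_zero (X : OML) : mor X unitOML := Mor (Y := unitOML) (fun _ => tt) (fun _ => top).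
Definition from_zero (Y : OML) : mor unitOML Y := Mor (X := unitOML) (fun _ => top) (fun _ => tt).
Definition zero_mor (X Y : OML) : mor X Y := comp (from_zero Y) (to_zero X).

Definition down_mor (X : OML) (a : X) : mor (down X a) X :=
  Mor (X := down X a) (fun u : dcar X a => compl (proj1_sig u))
      (fun x => exist (fun u => le u a) (meet a (compl x)) (meet_l _ _ _)).

Definition ker {X Y : OML} (f : mor X Y) : mor (down X (upper f top)) X :=
  down_mor X (upper f top).
Definition coker {X Y : OML} (f : mor X Y) := dagger (ker (dagger f)).

Definition zero_epic {X Y : OML} (e : mor X Y) : Prop :=
  forall (Z : OML) (g : mor Y Z), is_mor g ->
    meq (comp g e) (zero_mor X Z) -> meq g (zero_mor Y Z).

Definition zero_monic {X Y : OML} (m : mor X Y) : Prop :=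
  forall (W : OML) (g : mor W X), is_mor g ->
    meq (comp m g) (zero_mor W Y) -> meq g (zero_mor W X).

Definition img_mor {X Y : OML} (f : mor X Y) : mor (down Y (compl (lower f top))) Y :=
  Mor (X := down Y (compl (lower f top))) (fun v : dcar Y (compl (lower f top)) => compl (proj1_sig v))
      (fun y => exist (fun u => le u (compl (lower f top)))
                      (meet (compl y) (compl (lower f top))) (meet_r _ _ _)).

Definition epi_mor {X Y : OML} (f : mor X Y) : mor X (down Y (compl (lower f top))) :=
  Mor (Y := down Y (compl (lower f top))) (fun x => exist (fun u => le u (compl (lower f top)))
                      (meet (lower f x) (compl (lower f top))) (meet_r _ _ _))
      (fun v : dcar Y (compl (lower f top)) => upper f (proj1_sig v)).

Definition mid_mor {X Y : OML} (f : mor X Y) :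
  mor (down X (compl (upper f top))) (down Y (compl (lower f top))) :=
  Mor (X := down X (compl (upper f top))) (Y := down Y (compl (lower f top)))
      (fun x : dcar X (compl (upper f top)) => exist (fun u => le u (compl (lower f top)))
                      (meet (lower f (proj1_sig x)) (compl (lower f top))) (meet_r _ _ _))
      (fun v : dcar Y (compl (lower f top)) => exist (fun u => le u (compl (upper f top)))
                      (meet (upper f (proj1_sig v)) (compl (upper f top))) (meet_r _ _ _)).

(* Main.v *)
Require Import Defs.
From Stdlib Require Import ProofIrrelevance.

Lemma join_comm (X : OML) (x y : X) : join x y = join y x.
Proof. apply le_antisym; apply join_lub; split; first [apply join_r | apply join_l]. Qed.

Lemma le_compl_r (X : OML) (x y : X) : le x (compl y) -> le y (compl x).
Proof. intro H. pose proof (compl_rev _ _ H) as H'. rewrite compl_inv in H'. exact H'. Qed.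

Lemma meet_top_l (X : OML) (x : X) : meet top x = x.
Proof. apply le_antisym; [apply meet_r | apply meet_glb; split; [apply le_top | apply le_refl]]. Qed.

Lemma join_bot_r (X : OML) (x : X) : join x bot = x.
Proof. apply le_antisym; [apply join_lub; split; [apply le_refl | apply bot_le] | apply join_l]. Qed.

Lemma le_bot (X : OML) (w b : X) : le w b -> le w (compl b) -> w = bot.
Proof. intros h1 h2. apply le_antisym; [|apply bot_le]. rewrite <- (meet_compl b).
  apply meet_glb; split; assumption. Qed.

Lemma down_top_unique (X : OML) (v b : X) : le v b -> meet b (compl v) = bot -> v = b.
Proof. intros h e. rewrite (om_law v b h), meet_comm, e, join_bot_r. reflexivity. Qed.

Lemma is_mor_dagger {X Y : OML} (f : mor X Y) : is_mor f -> is_mor (dagger f).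
Proof. intros [h1 [h2 h3]]. split; [exact h2|split; [exact h1|]].
  intros x y; simpl. split; intro H; apply h3; exact H. Qed.

Section M.
Context {X Y : OML} (f : mor X Y) (hf : is_mor f).

Lemma lanti x x' : le x x' -> le (lower f x') (lower f x).
Proof. exact (proj1 hf x x'). Qed.
Lemma uanti y y' : le y y' -> le (upper f y') (upper f y).
Proof. exact (proj1 (proj2 hf) y y'). Qed.
Lemma gal x y : le y (lower f x) <-> le x (upper f y).
Proof. exact (proj2 (proj2 hf) x y). Qed.

Lemma lower_join x y : lower f (join x y) = meet (lower f x) (lower f y).
Proof. apply le_antisym.
  - apply meet_glb; split; apply lanti; [apply join_l | apply join_r].
  - apply gal, join_lub; split; apply gal; [apply meet_l | apply meet_r]. Qed.

Lemma lower_upper_top : lower f (upper f top) = top.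
Proof. apply le_antisym; [apply le_top|]. apply gal, le_refl. Qed.

Lemma lower_le_top x : le (lower f top) (lower f x).
Proof. apply lanti, le_top. Qed.

Lemma lower_compl_upper_top : lower f (compl (upper f top)) = lower f top.
Proof. rewrite <- (join_compl (upper f top)) at 1. rewrite lower_join, lower_upper_top, meet_top_l.
  reflexivity. Qed.

Lemma lower_top_from_upper : (forall y, upper f y = top) -> forall x, lower f x = top.
Proof. intros H x. apply le_antisym; [apply le_top|]. apply gal. rewrite H. apply le_top. Qed.
End M.

Lemma upper_join {X Y : OML} (f : mor X Y) (hf : is_mor f) x y :
  upper f (join x y) = meet (upper f x) (upper f y).
Proof. exact (lower_join (dagger f) (is_mor_dagger f hf) x y). Qed.
Lemma upper_lower_top {X Y : OML} (f : mor X Y) (hf : is_mor f) : upper f (lower f top) = top.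
Proof. exact (lower_upper_top (dagger f) (is_mor_dagger f hf)). Qed.
Lemma upper_compl_lower_top {X Y : OML} (f : mor X Y) (hf : is_mor f) :
  upper f (compl (lower f top)) = upper f top.
Proof. exact (lower_compl_upper_top (dagger f) (is_mor_dagger f hf)). Qed.
Lemma upper_top_from_lower {X Y : OML} (f : mor X Y) (hf : is_mor f) :
  (forall x, lower f x = top) -> forall y, upper f y = top.
Proof. exact (lower_top_from_upper (dagger f) (is_mor_dagger f hf)). Qed.
Lemma uanti' {X Y : OML} (f : mor X Y) (hf : is_mor f) y y' : le y y' -> le (upper f y') (upper f y).
Proof. exact (uanti f hf y y'). Qed.

Lemma down_mor_is_mor (X : OML) (a : X) : is_mor (down_mor X a).
Proof. split; [|split].
  - intros x x' h. simpl. apply compl_rev, h.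
  - intros y y' h. simpl. unfold d_le; simpl. apply meet_glb; split; [apply meet_l|].
    eapply le_trans; [apply meet_r| apply compl_rev, h].
  - intros [u hu] y; simpl. unfold d_le; simpl. split; intro h.
    + apply meet_glb; split; [exact hu|]. apply le_compl_r. exact h.
    + apply le_compl_r. eapply le_trans; [exact h | apply meet_r].
Qed.

Lemma meq_trans {X Y} (f g h : mor X Y) : meq f g -> meq g h -> meq f h.
Proof. intros [a b] [c d]; split; intros; congruence. Qed.
Lemma meq_comp_r {X Y Z} (h : mor Y Z) (g g' : mor X Y) : meq g g' -> meq (comp h g) (comp h g').
Proof. intros [a b]; split; intro; simpl; congruence. Qed.

Lemma meq_is_mor {X Y} (f g : mor X Y) : meq f g -> is_mor f -> is_mor g.
Proof. intros [E1 E2] [h1 [h2 h3]]. split; [|split].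
  - intros x x' h. rewrite <- !E1. apply h1, h.
  - intros y y' h. rewrite <- !E2. apply h2, h.
  - intros x y. rewrite <- E1, <- E2. apply h3. Qed.

Lemma ker_coker_img {X Y : OML} (f : mor X Y) : meq (ker (coker f)) (img_mor f).
Proof. split.
  - intro; reflexivity.
  - intro y. apply dcar_eq. simpl. apply meet_comm. Qed.

Lemma img_is_mor {X Y : OML} (f : mor X Y) : is_mor (img_mor f).
Proof. apply (meq_is_mor _ _ (ker_coker_img f)). apply down_mor_is_mor. Qed.

Lemma epi_is_mor {X Y : OML} (f : mor X Y) (hf : is_mor f) : is_mor (epi_mor f).
Proof. split; [|split].
  - intros x x' h. unfold d_le; simpl. apply meet_glb; split; [|apply meet_r].
    eapply le_trans; [apply meet_l| apply (lanti f hf), h].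
  - intros [y hy] [y' hy'] h. simpl. apply (uanti f hf), h.
  - intros x [y hy]. unfold d_le; simpl. split; intro h.
    + apply (gal f hf). eapply le_trans; [exact h|apply meet_l].
    + apply meet_glb; split; [apply (gal f hf), h | exact hy]. Qed.

Lemma img_epi {X Y : OML} (f : mor X Y) (hf : is_mor f) : meq (comp (img_mor f) (epi_mor f)) f.
Proof. split.
  - intro x. simpl. rewrite compl_meet, !compl_inv.
    rewrite (meet_comm _ (lower f x) (compl (lower f top))).
    symmetry. apply om_law. apply (lower_le_top f hf).
  - intro z. simpl. rewrite compl_meet, !compl_inv.
    set (b := compl (lower f top)).
    assert (E1 : upper f (join z (lower f top)) = upper f z).
    { rewrite (upper_join f hf), (upper_lower_top f hf). rewrite meet_comm. apply meet_top_l. }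
    rewrite <- E1.
    rewrite (om_law (lower f top) (join z (lower f top)) (join_r _ _ _)) at 2.
    rewrite (upper_join f hf), (upper_lower_top f hf), meet_top_l. reflexivity. Qed.

Lemma zero_from_upper {A B : OML} (g : mor A B) (hg : is_mor g) :
  (forall y, upper g y = top) -> meq g (zero_mor A B).
Proof. intro H. split; intro; [apply (lower_top_from_upper g hg H) | apply H]. Qed.

Lemma zero_from_lower {A B : OML} (g : mor A B) (hg : is_mor g) :
  (forall x, lower g x = top) -> meq g (zero_mor A B).
Proof. intro H. split; intro; [apply H | apply (upper_top_from_lower g hg H)]. Qed.

Lemma epi_zero_epic {X Y : OML} (f : mor X Y) (hf : is_mor f) : zero_epic (epi_mor f).
Proof. intros Z g hg [_ H]. apply zero_from_upper; [exact hg|]. intro z.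
  specialize (H z).
  change (upper f (meet (compl (lower f top)) (compl (proj1_sig (upper g z)))) = top) in H.
  destruct (upper g z) as [v hv] eqn:Ev. simpl in H.
  apply dcar_eq. simpl. apply down_top_unique; [exact hv|].
  apply le_bot with (b := lower f top).
  - apply (gal f hf). rewrite H. apply le_top.
  - apply meet_l. Qed.

Lemma mid_is_mor {X Y : OML} (f : mor X Y) (hf : is_mor f) : is_mor (mid_mor f).
Proof. split; [|split].
  - intros [x hx] [x' hx'] h. unfold d_le in *; simpl in *. apply meet_glb; split; [|apply meet_r].
    eapply le_trans; [apply meet_l| apply (lanti f hf), h].
  - intros [y hy] [y' hy'] h. unfold d_le in *; simpl in *. apply meet_glb; split; [|apply meet_r].
    eapply le_trans; [apply meet_l| apply (uanti f hf), h].
  - intros [x hx] [y hy]. unfold d_le; simpl. split; intro h.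
    + apply meet_glb; split; [|exact hx]. apply (gal f hf). eapply le_trans; [exact h|apply meet_l].
    + apply meet_glb; split; [|exact hy]. apply (gal f hf). eapply le_trans; [exact h|apply meet_l].
Qed.

Lemma mid_zero_epic {X Y : OML} (f : mor X Y) (hf : is_mor f) : zero_epic (mid_mor f).
Proof. intros Z g hg [_ H]. apply zero_from_upper; [exact hg|]. intro z.
  specialize (H z).
  apply (f_equal (@proj1_sig _ _)) in H.
  change (meet (upper f (meet (compl (lower f top)) (compl (proj1_sig (upper g z))))) (compl (upper f top))
          = compl (upper f top)) in H.
  destruct (upper g z) as [v hv] eqn:Ev. simpl in H.
  apply dcar_eq. simpl. apply down_top_unique; [exact hv|].
  apply le_bot with (b := lower f top); [|apply meet_l].
  match goal with |- le ?w _ => assert (K : le w (lower f (compl (upper f top)))) end.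
  { apply (gal f hf). rewrite <- H. apply meet_l. }
  rewrite (lower_compl_upper_top f hf) in K. exact K. Qed.

Lemma mid_zero_monic {X Y : OML} (f : mor X Y) (hf : is_mor f) : zero_monic (mid_mor f).
Proof. intros W g hg [H _]. apply zero_from_lower; [exact hg|]. intro w.
  specialize (H w).
  apply (f_equal (@proj1_sig _ _)) in H.
  change (meet (lower f (meet (compl (upper f top)) (compl (proj1_sig (lower g w))))) (compl (lower f top))
          = compl (lower f top)) in H.
  destruct (lower g w) as [v hv] eqn:Ev. simpl in H.
  apply dcar_eq. simpl. apply down_top_unique; [exact hv|].
  apply le_bot with (b := upper f top); [|apply meet_l].
  match goal with |- le ?w _ => assert (K : le w (upper f (compl (lower f top)))) end.
  { apply (gal f hf). rewrite <- H. apply meet_l. }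
  rewrite (upper_compl_lower_top f hf) in K. exact K. Qed.

Lemma mid_fact {X Y : OML} (f : mor X Y) (hf : is_mor f) :
  meq (comp (mid_mor f) (dagger (img_mor (dagger f)))) (epi_mor f).
Proof. split.
  - intro x. apply dcar_eq. simpl. f_equal.
    rewrite compl_meet, !compl_inv, (join_comm _ x).

    transitivity (lower f (join (upper f top) x)).
    + rewrite (om_law (upper f top) (join (upper f top) x) (join_l _ _ _)) at 2.
      rewrite (lower_join f hf), (lower_upper_top f hf), meet_top_l. reflexivity.
    + rewrite (lower_join f hf), (lower_upper_top f hf), meet_top_l. reflexivity.
  - intros [v hv]. simpl. rewrite compl_meet, !compl_inv.
    rewrite (meet_comm _ _ (compl (upper f top))).
    symmetry. apply om_law. apply (uanti f hf), le_top.
Qed.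
Theorem mainTheorem5 (X Y : OML) (f : mor X Y) (hf : is_mor f) :
  (* (i) Im(f) = ker(coker f) is i_f : ↓(f_*(1)^perp) -> Y *)
  (is_mor (img_mor f) /\ meq (ker (coker f)) (img_mor f)) /\
  (* (ii) e_f is a morphism, i_f ∘ e_f = f, and e_f is zero-epic *)
  (is_mor (epi_mor f) /\ meq (comp (img_mor f) (epi_mor f)) f /\
   zero_epic (epi_mor f)) /\
  (* (iii) m_f is a zero-epic and zero-monic morphism with
     m_f ∘ (i_{f†})† = e_f, hence f = i_f ∘ m_f ∘ (i_{f†})† *)
  (is_mor (mid_mor f) /\ zero_epic (mid_mor f) /\ zero_monic (mid_mor f) /\
   meq (comp (mid_mor f) (dagger (img_mor (dagger f)))) (epi_mor f) /\
   meq (comp (img_mor f) (comp (mid_mor f) (dagger (img_mor (dagger f))))) f).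
Proof.
  split; [split; [apply img_is_mor | apply ker_coker_img]|].
  split; [split; [apply epi_is_mor, hf | split; [apply img_epi, hf | apply epi_zero_epic, hf]]|].
  split; [apply mid_is_mor, hf|].
  split; [apply mid_zero_epic, hf|].
  split; [apply mid_zero_monic, hf|].
  split; [apply mid_fact, hf|].
  eapply meq_trans; [apply meq_comp_r, mid_fact, hf | apply img_epi, hf].
Qed.
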